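(* Let $\widehat G$ be a signed ribbon graph with underlying oriented ribbon graph $G$ and let $\widetilde L=\widetilde L_{\widehat G}$ be the diagram of the signed medial link $L_{\widehat G}\subset G\times I$ (as defined in the context). Then $$\langle \widetilde L\rangle(A,B,d)\;=\;A^{r(G)}\,B^{n(G)}\,d^{k(G)-1}\,R_{\widehat G}\!\left(\frac{Bd}{A},\,\frac{Ad}{B},\,\frac{1}{d}\right).$$
   Context: A ribbon graph $G$ is a graph $\Gamma=(V,E)$ (loops and multiple edges allowed) with a fixed cyclic order of edge-ends at each vertex; equivalently a compact surface with boundary that is a union of closed vertex discs and edge ribbons meeting in disjoint line segments, each segment on the boundary of exactly one vertex disc and one edge ribbon, each ribbon containing exactly two segments. The surface $G$ is oriented (counterclockwise rotation). For a ribbon graph $F$: $v(F),e(F),k(F)$ are the numbers of vertices, edges, connected components; $r(F)=v(F)-k(F)$, $n(F)=e(F)-r(F)$; $\mathrm{bc}(F)$ is the number of boundary components of the surface $F$. A spanning subgraph contains all vertices and a subset of edges; $\mathcal F(G)$ is the set of them; $\overline F=G-F$ is the complementary spanning subgraph (edges of $G$ not in $F$). A signed ribbon graph $\widehat G$ is $G$ with a sign function $\varepsilon:E\to\{\pm1\}$; $e_-(F)$ is the number of edges of $F$ with sign $-1$, and $s(F)=\tfrac12\bigl(e_-(F)-e_-(\overline F)\bigr)$. The signed Bollobás–Riordan polynomial is $$R_{\widehat G}(x,y,z)=\sum_{F\in\mathcal F(G)}x^{r(G)-r(F)+s(F)}\,y^{n(F)-s(F)}\,z^{k(F)-\mathrm{bc}(F)+n(F)}.$$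 Diagrams and Kauffman bracket: for a link in $G\times I$ ($I=[0,1]$) in general position w.r.t. projection to $G$, a diagram is its projected immersed curve with over/under information at finitely many double points. At a crossing the $A$-splitting joins the two local regions swept by the overcrossing arc rotated according to the orientation of $G$ until it reaches the undercrossing arc; the $B$-splitting joins the other two. A state $S$ chooses a splitting at each crossing; $\alpha(S),\beta(S)$ count $A$- and $B$-splittings, $\delta(S)$ counts components of the resulting curve. $\langle\widetilde L\rangle(A,B,d)=\sum_S A^{\alpha(S)}B^{\beta(S)}d^{\delta(S)-1}$. Medial links: the medial graph $H_G$ in $G$ has one 4-valent vertex at the middle of each edge ribbon, its edges running along the ribbons and turning at vertex discs to the next ribbon in the cyclic order. Regions of $G\setminus H_G$ containing a vertex of $\Gamma$ are black, others white. The natural diagram $\widetilde L_G$ makes each vertex of $H_G$ a crossing so that the overcrossing branch, rotated according to the orientation of $G$ until the undercrossing branch, sweeps out the black regions. The signed medial link diagram $\widetilde L_{\widehat G}$ is obtained from $\widetilde L_G$ by switching overcrossing and undercrossing at the crossings corresponding to negative edges. *)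

(* Defs.v *)
From HB Require Import structures.
From mathcomp Require Import all_boot all_order all_algebra all_fingroup.



Unset Printing Implicit Defensive.

Import GRing.Theory Num.Theory.
Local Open Scope ring_scope.

(* An oriented ribbon graph, combinatorially: vertices V, edges E, darts
   (half-edges) D; [vert d] is the vertex of dart d, [edge d] its edge,
   [alpha] swaps the two darts of an edge, and [sigma] is the counterclockwise
   cyclic order of dart-ends around each vertex. Isolated vertices are allowed
   (vertices with no darts). *)
Record ribbon := RGraph {
  rV : finType; rE : finType; rD : finType;
  vert : rD -> rV; edge : rD -> rE;
  sigma : {perm rD}; alpha : {perm rD} }.

Definition is_ribbon_graph (G : ribbon) : Prop :=
  (forall d, alpha G (alpha G d) = d) /\
  (forall d, alpha G d != d) /\
  (forall d, edge G (alpha G d) = edge G d) /\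
  (forall d d', edge G d = edge G d' -> d' = d \/ d' = alpha G d) /\
  (forall e, exists d, edge G d = e) /\
  (forall d, vert G (sigma G d) = vert G d) /\
  (forall d d', vert G d = vert G d' -> exists k, (sigma G ^+ k)%g d = d').

Section RibbonDefs.
Variable G : ribbon.
Local Notation V := (rV G).
Local Notation E := (rE G).
Local Notation D := (rD G).
Local Notation vert := (vert G).
Local Notation edge := (edge G).
Local Notation sigma := (sigma G).
Local Notation alpha := (alpha G).

Definition adjF (F : {set E}) : rel V := fun u w =>
  [exists d : D, [&& edge d \in F, vert d == u & vert (alpha d) == w]].

Definition kc (F : {set E}) : nat := n_comp (adjF F) predT.
Definition rk (F : {set E}) : int := (#|V|%:Z - (kc F)%:Z)%R.
Definition nul (F : {set E}) : int := (#|F|%:Z - rk F)%R.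

Definition nextF (F : {set E}) (d : D) : D :=
  let s := [seq (sigma ^+ i.+1)%g d | i <- iota 0 #|D|] in
  nth d s (find (fun x => edge x \in F) s).

(* boundary walk (face permutation) of the ribbon subgraph F *)
Definition faceF (F : {set E}) (d : D) : D := nextF F (alpha d).

(* bc(F): boundary components of the surface F = cycles of the face
   permutation on the darts of F, plus one boundary circle for each vertex
   disc carrying no edge of F *)
Definition bc (F : {set E}) : nat :=
  (#|[set froot (faceF F) d | d in [set d : D | edge d \in F]]|
   + #|[set v : V | [forall d : D, (vert d == v) ==> (edge d \notin F)]]|)%N.

Variable eps : E -> int.

Definition eminus (F : {set E}) : nat := #|[set e in F | eps e == -1]|.
Definition twice_s (F : {set E}) : int := ((eminus F)%:Z - (eminus (~: F))%:Z)%R.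

(* Signed Bollobas--Riordan polynomial, evaluated at x^(1/2) = xh,
   y^(1/2) = yh, z = z (exponents of x, y may be half-integers):
   x^(r(G)-r(F)+s(F)) = xh^(2(r(G)-r(F)) + 2s(F)),  y^(n(F)-s(F)) = yh^(2n(F)-2s(F)). *)
Definition BR_half (K : fieldType) (xh yh z : K) : K :=
  \sum_(F : {set E})
     xh ^ (2 * (rk setT - rk F) + twice_s F)%R
   * yh ^ (2 * nul F - twice_s F)%R
   * z ^ ((kc F)%:Z - (bc F)%:Z + nul F)%R.

(* ---- the signed medial link diagram ----
   Medial graph: one crossing per edge, one medial edge per corner
   c_d = (d, sigma d) of a vertex.  The four arms at the crossing of edge e
   are the ends of medial edges there: for each dart d of e the arm (d,true)
   = end of corner c_d, and the arm (d,false) = end of corner c_(sigma^-1 d). *)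
Definition arm := (D * bool)%type.

Definition med (a : arm) : arm :=
  if a.2 then (sigma a.1, false) else ((sigma^-1)%g a.1, true).

(* counterclockwise successor / predecessor of an arm around its crossing:
   ccw order (h,false), (alpha h,true), (alpha h,false), (h,true) *)
Definition succ_arm (a : arm) : arm :=
  if a.2 then (a.1, false) else (alpha a.1, true).
Definition pred_arm (a : arm) : arm :=
  if a.2 then (alpha a.1, false) else (a.1, true).

(* the local region between arm a and its ccw successor is black (contains
   the vertex disc of vert a.1) iff a.2; otherwise it is white *)
Definition black_after (a : arm) : bool := a.2.

(* overcrossing arms: in the natural diagram, the overcrossing strand is the
   pair of opposite arms whose ccw rotation sweeps the black regions; the
   crossing is switched at negative edges *)
Definition natural_over (a : arm) : bool := black_after a.
Definition signed_over (a : arm) : bool :=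
  if eps (edge a.1) == -1 then ~~ natural_over a else natural_over a.
Definition over_rep (b : arm) : arm :=
  if signed_over (b.1, true) then (b.1, true) else (b.1, false).

(* splitting of a crossing joining the two (opposite) regions following arms
   a and succ(succ a): resulting pairing of the four arms *)
Definition join_regions (a b : arm) : arm :=
  if (b == a) || (b == succ_arm (succ_arm a)) then pred_arm b else succ_arm b.

(* state S : E -> bool, true = A-splitting.  The A-splitting joins the regions
   swept by the overcrossing arc rotated ccw, the B-splitting the other two. *)
Definition state_pair (S : {ffun E -> bool}) (b : arm) : arm :=
  let o := over_rep b in
  if S (edge b.1) then join_regions o b else join_regions (succ_arm o) b.

(* delta(S): components of the resolved curve = components of the graph on
   arms formed by medial edges and the state pairings, plus one trivial
   circle (the medial curve) around each isolated vertex *)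
Definition delta (S : {ffun E -> bool}) : nat :=
  (n_comp (fun a b : arm => (b == med a) || (b == state_pair S a)) predT
   + #|[set v : V | [forall d : D, vert d != v]]|)%N.

Definition kbracket (K : fieldType) (A B d : K) : K :=
  \sum_(S : {ffun E -> bool})
     A ^+ #|[set e | S e]| * B ^+ #|[set e | ~~ S e]| * d ^ ((delta S)%:Z - 1)%R.

End RibbonDefs.

(* Main.v *)
Require Import Defs.
From HB Require Import structures.
From mathcomp Require Import all_boot all_order all_algebra all_fingroup.
From mathcomp Require Import zify ring.
Import GRing.Theory Num.Theory.
Set Implicit Arguments.
Unset Strict Implicit.

Section Comb.
Variable G : ribbon.
Local Notation D := (rD G).
Local Notation V := (rV G).
Local Notation sg := (sigma G).
Local Notation al := (alpha G).
Local Notation vt := (vert G).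
Local Notation ed := (edge G).
Hypothesis Hal : forall d, al (al d) = d.
Hypothesis Hedge : forall d, ed (al d) = ed d.
Hypothesis Hvs : forall d, vt (sg d) = vt d.
Hypothesis Htr : forall d d', vt d = vt d' -> exists k, (sg ^+ k)%g d = d'.

Lemma vert_iter k x : vt (iter k sg x) = vt x.
Proof. by elim: k => //= k IH; rewrite Hvs. Qed.

Variable F : {set rE G}.

Lemma nextF_nth z : nextF G F z =
  nth z [seq iter i.+1 sg z | i <- iota 0 #|D|]
      (find (fun x => ed x \in F) [seq iter i.+1 sg z | i <- iota 0 #|D|]).
Proof.
rewrite /nextF; have -> : [seq (sg ^+ i.+1)%g z | i <- iota 0 #|D|] =
   [seq iter i.+1 sg z | i <- iota 0 #|D|].
  by apply: eq_map => i; rewrite permX.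
by [].
Qed.

Lemma nextF_some z : (exists2 j, j < #|D| & ed (iter j.+1 sg z) \in F) ->
  exists j, [/\ j < #|D|, nextF G F z = iter j.+1 sg z,
              ed (iter j.+1 sg z) \in F &
              forall l, l < j -> ed (iter l.+1 sg z) \notin F].
Proof.
move=> [j0 Hj0 Hin]; rewrite nextF_nth.
set s := [seq _ | i <- _]; set p := (fun x : D => ed x \in F).
have Hsz : size s = #|D| by rewrite size_map size_iota.
have Hs i : i < #|D| -> nth z s i = iter i.+1 sg z.
  by move=> Hi; rewrite (nth_map 0) ?size_iota // nth_iota.
have Hhas : has p s.
  by apply/(has_nthP z); exists j0; rewrite ?Hsz // Hs.
have Hf : find p s < #|D| by rewrite -Hsz -has_find.
exists (find p s); split => //.
- by rewrite Hs.
- by rewrite -Hs //; apply: (nth_find z Hhas).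
- move=> l Hl; have := before_find z Hl; rewrite Hs ?(ltn_trans Hl) //.
  by rewrite /p => ->.
Qed.

Lemma nextF_none z : (forall j, j < #|D| -> ed (iter j.+1 sg z) \notin F) ->
  nextF G F z = z.
Proof.
move=> H; rewrite nextF_nth; set s := [seq _ | i <- _]; set p := (fun x : D => ed x \in F).
have Hsz : size s = #|D| by rewrite size_map size_iota.
have Hhas : ~~ has p s.
  apply/negP => /(has_nthP z) [i Hi]; rewrite Hsz in Hi.
  by rewrite (nth_map 0) ?size_iota // nth_iota // /p (negbTE (H _ Hi)).
by rewrite (hasNfind Hhas) nth_default.
Qed.

Lemma exists_idx y z : vt y = vt z -> exists2 j, j < #|D| & iter j.+1 sg z = y.
Proof.
move=> Hv; have [k Hk] := Htr (esym Hv).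
have Hc : fconnect sg z y by rewrite -Hk permX fconnect_iter.
have Hord : fingraph.order sg z <= #|D| by apply: max_card.
have Hinj : injective sg by apply: perm_inj.
have Hi := findex_max Hc; have Hit := iter_findex Hc.
case Ei : (findex sg z y) Hi Hit => [|i] Hi Hit.
  exists (fingraph.order sg z).-1.
    by move: Hord (fingraph.order_gt0 sg z); case: (fingraph.order sg z).
  by rewrite prednK ?fingraph.order_gt0 // iter_order // -Hit.
by exists i => //; apply: leq_trans (ltnW Hi) Hord.
Qed.


Local Notation inF x := (ed x \in F).
Definition hasF x := [exists y, (vt y == vt x) && (ed y \in F)].

Lemma nextF_eq z j : j < #|D| -> inF (iter j.+1 sg z) ->
  (forall l, l < j -> ~~ inF (iter l.+1 sg z)) -> nextF G F z = iter j.+1 sg z.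
Proof.
move=> Hj Hin Hmin.
have [k [Hk -> Hkin Hkmin]] := nextF_some (ex_intro2 _ _ j Hj Hin).
case: (ltngtP k j) => [Hlt|Hlt|-> //].
  by move: (Hmin _ Hlt); rewrite Hkin.
by move: (Hkmin _ Hlt); rewrite Hin.
Qed.

Lemma NF_in z : hasF z -> inF (nextF G F z).
Proof.
case/existsP => y /andP[/eqP Hv Hy].
have [j Hj Hjy] := exists_idx Hv.
have Hj' : inF (iter j.+1 sg z) by rewrite Hjy.
by have [k [_ -> Hk _]] := nextF_some (ex_intro2 _ _ j Hj Hj').
Qed.

Lemma NF_vert z : vt (nextF G F z) = vt z.
Proof.
rewrite nextF_nth; set s := [seq _ | i <- _].
set k := find _ _.
case: (ltnP k (size s)) => Hk.
  have /mapP [i _ ->] : nth z s k \in s by apply: mem_nth.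
  exact: vert_iter.
by rewrite nth_default.
Qed.

Lemma NF_inv z : inF (nextF G F z) -> hasF z.
Proof. by move=> H; apply/existsP; exists (nextF G F z); rewrite NF_vert eqxx. Qed.

Lemma NF_spec z : hasF z ->
  exists k, [/\ k < #|D|, nextF G F z = iter k.+1 sg z,
              inF (iter k.+1 sg z) &
              forall l, l < k -> ~~ inF (iter l.+1 sg z)].
Proof.
case/existsP => y /andP[/eqP Hv Hy].
have [j Hj Hjy] := exists_idx Hv.
apply: nextF_some; exists j => //; by rewrite Hjy.
Qed.

Lemma cardD_gt0 (z : D) : 0 < #|D|.
Proof. by apply/card_gt0P; exists z. Qed.

Lemma NF1 z : inF (sg z) -> nextF G F z = sg z.
Proof. by move=> H; apply: (@nextF_eq z 0) => //; apply: cardD_gt0. Qed.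

Lemma NF2 z : ~~ inF (sg z) -> hasF z -> nextF G F (sg z) = nextF G F z.
Proof.
move=> Hn Hh.
have [k [Hk Ek Hkin Hkmin]] := NF_spec Hh.
case: k Hk Ek Hkin Hkmin => [|k] Hk Ek Hkin Hkmin.
  by move: Hkin; rewrite (negbTE Hn).
rewrite Ek iterSr; apply: nextF_eq.
- exact: ltn_trans (ltnSn k) Hk.
- by rewrite -iterSr.
- by move=> l Hl; rewrite -iterSr; apply: Hkmin.
Qed.

Definition gF x := if ed x \in F then al x else x.
Definition phiF x := gF (sg x).
Definition faceF' x := if ed x \in F then faceF G F x else x.
Definition hF x := if ed x \in F then al x else nextF G F x.

Lemma gFK x : gF (gF x) = x.
Proof. by rewrite /gF; case Hx: (ed x \in F); rewrite ?Hedge Hx ?Hal. Qed.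

Lemma inF_gF x : inF (gF x) = inF x.
Proof. by rewrite /gF; case Hx: (ed x \in F); rewrite ?Hedge ?Hx. Qed.

Lemma phiF_inj : injective phiF.
Proof. by move=> x y /(can_inj gFK) /perm_inj. Qed.

Lemma L_conn z : inF (nextF G F z) -> fconnect phiF z (al (nextF G F z)).
Proof.
move=> Hin; have [k [Hk Ek Hkin Hkmin]] := NF_spec (NF_inv Hin).
have Hit : forall i, i <= k -> iter i phiF z = iter i sg z.
  elim=> [//|i IH] Hi /=; rewrite IH ?(ltnW Hi) // /phiF /gF.
  by rewrite -[sg (iter i sg z)]/(iter i.+1 sg z) (negbTE (Hkmin _ Hi)).
have -> : al (nextF G F z) = iter k.+1 phiF z.
  by rewrite /= Hit // /phiF /gF -[sg (iter k sg z)]/(iter k.+1 sg z) Hkin Ek.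
exact: fconnect_iter.
Qed.


Lemma hasF_self x : inF x -> hasF x.
Proof. by move=> H; apply/existsP; exists x; rewrite eqxx. Qed.

Lemma iter_sg_inj n : injective (iter n sg).
Proof.
by move=> x y; rewrite -!permX => /perm_inj.
Qed.

Lemma nextF_inj_aux z1 z2 k1 k2 : inF z1 -> iter k1.+1 sg z1 = iter k2.+1 sg z2 ->
  k1 <= k2 -> (forall l, l < k2 -> ~~ inF (iter l.+1 sg z2)) -> z1 = z2.
Proof.
move=> H1 E Hle Hmin; move: E; rewrite -(subnKC Hle) -addSn iterD.
move/iter_sg_inj => E.
case Em : (k2 - k1) E => [//|m] E.
have Hl : m < k2 by rewrite -(subnKC Hle) Em addnS ltnS leq_addl.
by move: (Hmin _ Hl); rewrite -E H1.
Qed.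

Lemma nextF_inj z1 z2 : inF z1 -> inF z2 -> nextF G F z1 = nextF G F z2 -> z1 = z2.
Proof.
move=> H1 H2 E.
have [k1 [_ E1 _ M1]] := NF_spec (hasF_self H1).
have [k2 [_ E2 _ M2]] := NF_spec (hasF_self H2).
rewrite E1 E2 in E.
case: (leqP k1 k2) => Hk; first exact: nextF_inj_aux E Hk M2.
by apply/esym; apply: nextF_inj_aux (esym E) (ltnW Hk) M1.
Qed.

Lemma faceF'_inj : injective faceF'.
Proof.
have Hin x : inF x -> inF (faceF G F x).
  by move=> Hx; rewrite /faceF; apply: NF_in; apply: hasF_self; rewrite Hedge.
move=> x y; rewrite /faceF'.
case Hx: (inF x); case Hy: (inF y) => E.
- rewrite /faceF in E; apply: (can_inj Hal); apply: nextF_inj E; by rewrite Hedge.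
- by move: (Hin _ Hx); rewrite E Hy.
- by move: (Hin _ Hy); rewrite -E Hx.
- exact: E.
Qed.

Definition Fd : {pred D} := [pred x | ed x \in F].
Definition hasFp : {pred D} := [pred x | hasF x].

Lemma faces_count : n_comp (frel faceF') Fd = n_comp (frel phiF) hasFp.
Proof.
have syme : connect_sym (frel faceF') := fconnect_sym faceF'_inj.
have syme' : connect_sym (frel phiF) := fconnect_sym phiF_inj.
have Hin x : inF x -> inF (faceF' x).
  by move=> Hx; rewrite /faceF' Hx /faceF; apply: NF_in; apply: hasF_self; rewrite Hedge.
have cl : closed (frel faceF') Fd.
  apply: intro_closed => // x y /eqP <-; rewrite !inE; exact: Hin.
rewrite (adjunction_n_comp hF syme syme' cl).
  apply: eq_n_comp_r => x; rewrite !inE /hF.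
  case Hx: (inF x); first by rewrite Hedge Hx hasF_self.
  by apply/idP/idP; [apply: NF_inv | apply: NF_in].
apply: (@intro_adjunction _ _ hF _ _ syme' _ cl (fun x _ => al x)).
- move=> x Hx; rewrite inE in Hx; split.
    by rewrite /hF Hedge Hx Hal connect0.
  move=> y Hy /eqP <-; rewrite /faceF' Hx /faceF.
  apply: L_conn; apply: NF_in; apply: hasF_self; by rewrite Hedge.
- move=> x Hx; rewrite inE in Hx; split.
    move: Hx; rewrite /hF; case Hx': (inF x) => Hx.
      by rewrite Hal connect0.
    exact: L_conn.
  move=> y /eqP <-; rewrite /phiF /gF.
  move: Hx; rewrite /hF.
  case Hx': (inF x) => Hx; case Hs: (inF (sg x)).
  + rewrite Hedge Hs Hal; apply: connect1; rewrite /= /faceF' Hedge Hx' /faceF Hal.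
    by rewrite NF1.
  + rewrite Hs; apply: connect1; rewrite /= /faceF' Hedge Hx' /faceF Hal.
    by rewrite NF2 // ?Hs // hasF_self.
  + by rewrite Hedge Hs Hal NF1.
  + by rewrite Hs NF2 ?Hs // NF_inv.
Qed.


Definition noFv : {pred V} :=
  [pred v | [exists x, vt x == v] && [forall x, (vt x == v) ==> (ed x \notin F)]].

Lemma n_comp_false (T : finType) (a : {pred T}) :
  n_comp (fun _ _ : T => false) a = #|a|.
Proof.
rewrite /n_comp_mem; apply: eq_card => x; rewrite !inE.
suff -> : roots (fun _ _ : T => false) x by [].
rewrite /roots /fingraph.root; case: (pickP (connect (fun _ _ : T => false) x)) => [y /connectP [p]|]//=.
by case: p => //= _ ->.
Qed.

Lemma verts_count : n_comp (frel phiF) [predC hasFp] = #|noFv|.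
Proof.
have syme : connect_sym (fun _ _ : V => false) by apply: sym_connect_sym.
have syme' : connect_sym (frel phiF) := fconnect_sym phiF_inj.
have cl : closed (fun _ _ : V => false) noFv by [].
rewrite -(n_comp_false noFv) (adjunction_n_comp vt syme syme' cl).
  apply: eq_n_comp_r => x; rewrite !inE /hasF.
  apply/idP/idP.
    move=> /existsP H; apply/andP; split; first by apply/existsP; exists x.
    apply/forallP => y; apply/implyP => Hy; apply/negP => Hy'.
    by apply: H; exists y; rewrite Hy Hy'.
  case/andP=> _ /forallP H; apply/existsP => [[y /andP [Hy Hy']]].
  by move: (H y); rewrite Hy Hy'.
have Hxch v (Hv : v \in noFv) : exists x, vt x == v.
  by move: Hv; rewrite inE => /andP [/existsP H _].
apply: (@intro_adjunction _ _ vt _ _ syme' _ cl (fun v Hv => xchoose (Hxch v Hv))).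
- move=> v Hv; split; last by [].
  by rewrite (eqP (xchooseP (Hxch v Hv))) connect0.
- move=> x Hx; have Hno : forall z, vt z = vt x -> ~~ inF z.
    move: Hx; rewrite inE => /andP [_ /forallP H] z Hz.
    by move: (H z); rewrite Hz eqxx.
  have Hphi z : vt z = vt x -> phiF z = sg z.
    by move=> Hz; rewrite /phiF /gF (negbTE (Hno _ _)) // Hvs.
  split.
    set y := xchoose _.
    have Hy : vt x = vt y by rewrite (eqP (xchooseP (Hxch (vt x) Hx))).
    have [k <-] := Htr Hy.
    have -> : (sg ^+ k)%g x = iter k phiF x.
      rewrite permX; elim: k => //= k ->; rewrite Hphi //.
      elim: k {y Hy} => //= k IH; by rewrite Hphi // Hvs.
    exact: fconnect_iter.
  move=> y /eqP <-; rewrite Hphi // Hvs; exact: connect0.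
Qed.


Definition pF (a : arm G) : arm G := (gF a.1, ~~ a.2).
Definition armrel : rel (arm G) := fun a b => (b == med G a) || (b == pF a).

Lemma medK : involutive (med G).
Proof. by case=> x [|]; rewrite /med /= ?permK ?permKV. Qed.

Lemma pFK : involutive pF.
Proof. by case=> x b; rewrite /pF /= gFK negbK. Qed.

Lemma armrel_sym : symmetric armrel.
Proof.
move=> a b; rewrite /armrel.
have E1 : (b == med G a) = (a == med G b) by apply/eqP/eqP => ->; rewrite medK.
have E2 : (b == pF a) = (a == pF b) by apply/eqP/eqP => ->; rewrite pFK.
by rewrite E1 E2.
Qed.

Lemma arms_count : n_comp armrel predT = n_comp (frel phiF) predT.
Proof.
have syme := sym_connect_sym armrel_sym.
have syme' : connect_sym (frel phiF) := fconnect_sym phiF_inj.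
have cl : closed armrel predT by [].
pose h (x : D) : arm G := (x, true).
rewrite (adjunction_n_comp h syme syme' cl); first by apply: eq_n_comp_r.
apply: (@intro_adjunction _ _ h _ _ syme' _ cl
   (fun x _ => if x.2 then x.1 else ((sg^-1)%g x.1))).
- case=> z b _; split.
    case: b => /=; first exact: connect0.
    by apply: connect1; rewrite /armrel /med /= eqxx.
  case=> y c _; case: b => /orP [/eqP E | /eqP E]; rewrite E /=.
  + by rewrite permK connect0.
  + rewrite syme'; apply: connect1; by rewrite /= /phiF permKV gFK.
  + exact: connect0.
  + by apply: connect1; rewrite /= /phiF permKV.
- move=> x _; split; first exact: connect0.
  move=> y /eqP <-; apply: (@connect_trans _ _ (sg x, false)).
    by apply: connect1; rewrite /armrel /med /= eqxx.
  by apply: connect1; rewrite /armrel /pF /= eqxx orbT.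
Qed.


Lemma card_root_img (T : finType) (e : rel T) (a : {pred T}) :
  connect_sym e -> closed e a ->
  #|[set fingraph.root e x | x in a]| = n_comp e a.
Proof.
move=> sym cl; rewrite /n_comp_mem; apply: eq_card => x; rewrite !inE.
apply/imsetP/andP.
  case=> y Hy ->; split; first exact: roots_root.
  by rewrite -(closed_connect cl (connect_root e y)).
by case=> /eqP Hr Ha; exists x.
Qed.

Lemma fconnect_iterP (T : finType) (f : T -> T) x y :
  reflect (exists n, iter n f x = y) (fconnect f x y).
Proof.
apply: (iffP idP); first by move=> H; exists (findex f x y); apply: iter_findex.
by case=> n <-; apply: fconnect_iter.
Qed.

Lemma bc_eq : bc G F = (n_comp (frel faceF') Fd + #|noFv|
                        + #|[set v | [forall d, vt d != v]]|)%N.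
Proof.
have syme : connect_sym (frel faceF') := fconnect_sym faceF'_inj.
have Hin x : inF x -> inF (faceF' x).
  by move=> Hx; rewrite /faceF' Hx /faceF; apply: NF_in; apply: hasF_self; rewrite Hedge.
have cl : closed (frel faceF') Fd.
  apply: intro_closed => // x y /eqP <-; rewrite !inE; exact: Hin.
rewrite /bc -addnA; congr (_ + _)%N.
  rewrite -card_root_img //.
  have Hr x : inF x -> froot (faceF G F) x = fingraph.root (frel faceF') x.
    move=> Hx.
    have Hit n : iter n (faceF G F) x = iter n faceF' x /\ inF (iter n faceF' x).
      elim: n => [|n [IH1 IH2]] //=; rewrite IH1; split; last exact: Hin.
      by rewrite /faceF' IH2.
    rewrite /fingraph.root; congr odflt; apply: eq_pick => y /=.
    apply/fconnect_iterP/fconnect_iterP => [[n <-]|[n <-]]; exists n;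
      by case: (Hit n).
  congr #|pred_of_set _|.
  apply/setP => y; apply/imsetP/imsetP => [[x Hx ->]|[x Hx ->]]; exists x;
    rewrite ?inE in Hx *; rewrite ?Hr //.
rewrite -(cardID [pred v | [exists x, vt x == v]]); congr (_ + _)%N.
  apply: eq_card => v; rewrite !inE andbC.
  by [].
apply: eq_card => v; rewrite !inE.
apply/andP/forallP.
  case=> /existsP H _ x; apply/negP => /eqP Hx; apply: H; exists x; by rewrite Hx.
move=> H; split; first by apply/existsP => [[x Hx]]; move: (H x); rewrite Hx.
by apply/forallP => x; rewrite (negbTE (H x)).
Qed.

Lemma delta_eq (rS : rel (arm G)) : rS =2 armrel ->
  (n_comp rS predT + #|[set v | [forall d, vt d != v]]|)%N = bc G F.
Proof.
move=> HrS; rewrite bc_eq faces_count -verts_count.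
rewrite (eq_n_comp (eq_connect HrS)) arms_count.
by rewrite -(n_compC hasFp).
Qed.

End Comb.

Section StateLemma.
Variable G : ribbon.
Variable eps : rE G -> int.
Hypothesis Heps : forall e, eps e = 1%R \/ eps e = (-1)%R.
Hypothesis Hal : forall d, alpha G (alpha G d) = d.
Hypothesis Hfix : forall d, alpha G d != d.

Definition Fs (S : {ffun rE G -> bool}) : {set rE G} :=
  [set e | S e == (eps e == 1%R)].

Lemma state_pair_eq (S : {ffun rE G -> bool}) (b : arm G) : @state_pair G eps S b = pF (Fs S) b.
Proof.
case: b => h t.
have Hne c c' : ((alpha G h, c) == (h, c') :> arm G) = false.
  by apply/negP => /eqP [] /eqP; rewrite (negbTE (Hfix h)).
have Hne' c c' : ((h, c) == (alpha G h, c') :> arm G) = false.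
  by rewrite eq_sym Hne.
rewrite /state_pair /over_rep /signed_over /natural_over /black_after /pF /gF /Fs /=.
rewrite inE.
case: (Heps (edge G h)) => -> /=; case: (S (edge G h)); case: t;
  rewrite /join_regions /succ_arm /pred_arm /= ?eqxx ?Hne ?Hne' ?Hal //=.
all: by rewrite ?xpair_eqE ?eqxx /=.
Qed.

End StateLemma.

Section Counts.
Variable G : ribbon.
Variable eps : rE G -> int.
Hypothesis Heps : forall e, eps e = 1%R \/ eps e = (-1)%R.

Definition Sof (F : {set rE G}) : {ffun rE G -> bool} :=
  [ffun e => (e \in F) == (eps e == 1%R)].

Lemma Fs_Sof F : Fs eps (Sof F) = F.
Proof. by apply/setP => e; rewrite !inE ffunE; case: (e \in F); case: (eps e == 1%R). Qed.

Lemma Sof_Fs S : Sof (Fs eps S) = S.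
Proof. by apply/ffunP => e; rewrite !ffunE !inE; case: (S e); case: (eps e == 1%R). Qed.

Lemma eps1 e : (eps e == 1%R) = ~~ (eps e == (-1)%R).
Proof. by case: (Heps e) => ->. Qed.

Lemma count1 F : (#|[set e | Sof F e]| + eminus G eps F = #|F| + eminus G eps (~: F))%N.
Proof.
rewrite /eminus -(cardID F [set e | Sof F e]) -(cardID [set e | eps e == (-1)%R] F).
have -> : #|[predI [set e | Sof F e] & F]| = #|[predD F & [set e | eps e == (-1)%R]]|.
  by apply: eq_card => e; rewrite !inE ffunE eps1; case: (e \in F); case: (eps e == (-1)%R).
have -> : #|[predD [set e | Sof F e] & F]| = #|[set e in ~: F | eps e == (-1)%R]|.
  by apply: eq_card => e; rewrite !inE ffunE eps1; case: (e \in F); case: (eps e == (-1)%R).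
have -> : #|[predI F & [set e | eps e == (-1)%R]]| = #|[set e in F | eps e == (-1)%R]|.
  by apply: eq_card => e; rewrite !inE.
by rewrite [in LHS]addnC addnA.
Qed.

Lemma count2 F : (#|[set e | ~~ Sof F e]| + #|[set e | Sof F e]| = #|rE G|)%N.
Proof.
rewrite addnC -(cardID [set e | Sof F e] (rE G)); congr (_ + _)%N; apply: eq_card => e;
  by rewrite !inE ?andbT.
Qed.

End Counts.

Local Open Scope ring_scope.
Lemma alg_id (K : fieldType) (A B d xh yh : K) (p q r X Y Z u : int) :
  A != 0 -> B != 0 -> d != 0 -> xh ^+ 2 = B * d / A -> xh * yh = d ->
  X - Y = 2 * u ->
  A ^ p * B ^ q * d ^ r * (xh ^ X * yh ^ Y * d^-1 ^ Z) =
  A ^ (p - u) * B ^ (q + u) * d ^ (r + u + Y - Z).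
Proof.
move=> HA HB Hd Hxh Hxy Hu.
have xh0 : xh != 0.
  apply/eqP => E; move: Hxh; rewrite E expr0n /= => /esym /eqP.
  by rewrite !mulf_eq0 invr_eq0 (negbTE HA) (negbTE HB) (negbTE Hd).
have -> : yh = xh^-1 * d by rewrite -Hxy mulKf.
rewrite expfzMl exprz_inv [xh ^ X * _]mulrA -expfzDr // Hu.
rewrite -exprz_exp -exprnP Hxh !expfzMl !exprz_inv.
rewrite ![A ^ (_ - _)]expfzDr // ![B ^ (_ + _)]expfzDr //.
rewrite ![d ^ (_ - _)]expfzDr // ![d ^ (_ + _)]expfzDr //.
set a1 := A ^ p; set a2 := A ^ (- u); set b1 := B ^ q; set b2 := B ^ u.
set d1 := d ^ r; set d2 := d ^ u; set d3 := d ^ Y; set d4 := d ^ (- Z).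
ring.
Qed.

Unset Implicit Arguments.
Set Strict Implicit.

Theorem theorem4p1 (K : fieldType) (G : ribbon) (HG : is_ribbon_graph G)
    (eps : rE G -> int) (Heps : forall e, eps e = 1 \/ eps e = -1)
    (A B d xh yh : K) (HA : A != 0) (HB : B != 0) (Hd : d != 0)
    (Hxh : xh ^+ 2 = B * d / A) (Hxy : xh * yh = d) :
  kbracket G eps K A B d =
    A ^ rk G setT * B ^ nul G setT * d ^ ((kc G setT)%:Z - 1)
    * BR_half G eps K xh yh d^-1.
Proof.
case: HG => Hal [Hfix [Hedge [_ [_ [Hvs Htr]]]]].
have Hdelta S : delta G eps S = bc G (Fs eps S).
  rewrite /delta; apply: (delta_eq Hal Hedge Hvs Htr) => a b.
  by rewrite /armrel (state_pair_eq Heps Hal Hfix).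
rewrite /kbracket /BR_half mulr_sumr.
rewrite (reindex (Sof eps)); last first.
  by apply: onW_bij; exists (Fs eps) => x; [exact: Fs_Sof | exact: Sof_Fs].
apply: eq_bigr => F _.
rewrite Hdelta Fs_Sof.
rewrite (@alg_id K A B d xh yh _ _ _ _ _ _
   (rk G setT - rk G F - nul G F + twice_s G eps F) HA HB Hd Hxh Hxy); last first.
  rewrite /twice_s; lia.
rewrite !exprnP.
have C1 := count1 Heps F; have C2 := count2 eps F.
have Hc : #|[set: rE G]| = #|rE G| by rewrite cardsT.
congr (_ ^ _ * _ ^ _ * _ ^ _); rewrite /nul /rk /twice_s; lia.
Qed.
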